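(* Let $i\geq1$, let $T$ be an SSRT of partition shape $\lambda$ such that $\lambda$ has an addable node in column $i+1$, and let $f_{i+1}(T)=T_{(r,i)}$. Define $T'$ by $T'_{(p,q)}=T_{(p,q)}$ if $q\neq i$; $T'_{(p,i)}=T_{(p,i)}$ if $p<r$; and $T'_{(p,i)}=T_{(p+1,i)}$ if $p\geq r$ (for those $p$ with $(p+1,i)\in\lambda$). Then $T'$ is an SSRT.
   Context: SSRTs (French convention: rows numbered bottom to top, $(p,q)$ = row $p$, column $q$): fillings of a partition shape with positive integers weakly decreasing along rows left to right and strictly decreasing along columns bottom to top. With $T_{(p,q)}=0$ for $(p,q)\notin\lambda$ and $T_{(0,q)}=\infty$, $f_{i+1}(T)$ is the entry $T_{(r,i)}$ where $r$ is the largest integer with $(r,i)\in\lambda$ and $T_{(r,i)}<T_{(r-1,i+1)}$; this is the first entry that moves horizontally in the backward jeu de taquin slide started at the addable node in column $i+1$ (at each step the empty box at $(p,q)$ is filled from whichever of $(p-1,q)$, $(p,q-1)$ holds the smaller entry, ties going to $(p-1,q)$). Thus $T'$ is obtained by removing $T_{(r,i)}$ and sliding the entries above it in column $i$ down one row. *)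

(* Defs.v *)
From mathcomp Require Import all_boot.
Set Implicit Arguments. Unset Strict Implicit. Unset Printing Implicit Defensive.

(* Partitions: lambda = [:: lambda_1; lambda_2; ...] (row lengths, row 1 is the
   bottom row in French convention), weakly decreasing, positive parts. *)
Definition is_partition (lam : seq nat) : bool :=
  sorted geq lam && all (fun x => 0 < x) lam.

(* (p,q) in lambda : row p (bottom to top, from 1), column q (from 1). *)
Definition in_shape (lam : seq nat) (p q : nat) : bool :=
  [&& 0 < p, p <= size lam, 0 < q & q <= nth 0 lam p.-1].

Definition addable (lam : seq nat) (p q : nat) : bool :=
  [&& 0 < p, 0 < q, ~~ in_shape lam p q,
      (p == 1) || in_shape lam p.-1 q & (q == 1) || in_shape lam p q.-1].

(* A filling is a function row -> column -> entry; T(p,q) = 0 off the shape. *)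
Definition filling := nat -> nat -> nat.

Definition is_SSRT (lam : seq nat) (T : filling) : Prop :=
  [/\ is_partition lam,
      (forall p q, in_shape lam p q -> 0 < T p q),
      (forall p q, ~~ in_shape lam p q -> T p q = 0),
      (forall p q, in_shape lam p q -> in_shape lam p q.+1 -> T p q.+1 <= T p q)
    & (forall p q, in_shape lam p q -> in_shape lam p.+1 q -> T p.+1 q < T p q)].

(* T_(r,i) < T_(r-1,i+1), with the convention T_(0,q) = infinity. *)
Definition lt_above (T : filling) (r i : nat) : bool :=
  (r == 1) || (T r i < T r.-1 i.+1).

(* r is the row such that f_{i+1}(T) = T_(r,i): the largest r with
   (r,i) in lambda and T_(r,i) < T_(r-1,i+1). *)
Definition f_row (lam : seq nat) (T : filling) (i r : nat) : Prop :=
  [/\ in_shape lam r i, lt_above T r i &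
      forall r', r < r' -> in_shape lam r' i -> ~~ lt_above T r' i].

Definition remove_slide (T : filling) (i r : nat) : filling :=
  fun p q => if (q == i) && (r <= p) then T p.+1 i else T p q.

(* Main.v *)
Require Import Defs.
From mathcomp Require Import all_boot.
From mathcomp Require Import zify.

Lemma part_mono lam a b : is_partition lam -> a <= b -> b < size lam ->
  nth 0 lam b <= nth 0 lam a.
Proof.
case/andP=> so _ ab bs.
have := sorted_leq_nth (leT := geq) _ _ 0 so.
move=> /(_ _ _ a b); apply => //.
- by move=> x y z /= h1 h2; apply: leq_trans h2 h1.
- by move=> x /=.
- rewrite inE /=; lia.

Qed.

Lemma part_pos lam k : is_partition lam -> k < size lam -> 0 < nth 0 lam k.
Proof. by case/andP=> _ /all_nthP; apply. Qed.

Lemma shape_down lam p p' q : is_partition lam -> in_shape lam p q ->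
  0 < p' -> p' <= p -> in_shape lam p' q.
Proof.
move=> hp /and4P[h1 h2 h3 h4] h5 h6; apply/and4P; split => //.
  lia.
apply: leq_trans h4 _; apply: part_mono => //; lia.
Qed.

Ltac slia := (repeat match goal with
  | H : is_true (in_shape _ _ _) |- _ => clear H
  | H : is_true (lt_above _ _ _) |- _ => clear H
  | H : is_true (addable _ _ _) |- _ => clear H
  | H : is_true (is_partition _) |- _ => clear H
  | H : is_true (_ || _) |- _ => clear H
  | H : is_true (~~ in_shape _ _ _) |- _ => clear H
  | H : is_true (~~ ((_ == _) && (_ == _))) |- _ => clear H
  end); lia.

Theorem lemma6p1 (lam : seq nat) (T : filling) (i r : nat) :
  1 <= i ->
  is_SSRT lam T ->
  (exists p, addable lam p i.+1) ->
  f_row lam T i r ->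
  exists mu : seq nat, is_SSRT mu (remove_slide T i r).
Proof.
move=> i1 [hpart Tpos Tzero Trow Tcol] [p0 hadd] [rin rlt rmax].
case/and5P: hadd => p0pos _ p0n p0below p0left.
have p0i : in_shape lam p0 i by move: p0left; rewrite /= eqSS (negbTE (_ : i != 0)) //; slia.
have exh : exists p, in_shape lam p i by exists p0.
have ubh : forall p, in_shape lam p i -> p <= size lam by move=> p /and4P[].
case: (ex_maxnP exh ubh) => h hin hmax.
have p0h : p0 <= h by apply: hmax.
have rh : r <= h by apply: hmax.
have rowh : nth 0 lam h.-1 = i.
  move: hin => /and4P[h1 h2 h3 h4].
  have : nth 0 lam h.-1 <= nth 0 lam p0.-1.
    apply: part_mono => //; move: p0i => /and4P[]; slia.
  move: p0n p0i; rewrite /in_shape => /negP p0n /and4P[q1 q2 q3 q4] le.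
  apply/eqP; rewrite eqn_leq h4 andbT.
  apply: leq_trans le _; rewrite leqNgt; apply/negP => lt; apply: p0n.
  by apply/and4P; split.
have colbelow : forall p, 0 < p -> p <= h -> in_shape lam p i.
  by move=> p pp ph; apply: shape_down hin _ _.
have notabove : forall p, h < p -> ~~ in_shape lam p i.
  by move=> p hp; apply/negP => /hmax; slia.
have h0 : 0 < h by move: hin => /and4P[].
have hs : h <= size lam by move: hin => /and4P[].
set mu := mkseq (fun k => if k.+1 == h then i.-1 else nth 0 lam k)
            (if i == 1 then h.-1 else size lam).
have i1h : i == 1 -> h = size lam.
  move=> /eqP ei; apply/eqP; rewrite eqn_leq hs /=; apply: hmax.
  have sp : 0 < size lam by slia.
  have := @part_pos lam (size lam).-1 hpart (ltac:(slia)).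
  move=> hh; apply/and4P; split => //; slia.
have smu : size mu = (if i == 1 then h.-1 else size lam) by rewrite size_mkseq.
have nmu : forall k, k < size mu -> nth 0 mu k = if k.+1 == h then i.-1 else nth 0 lam k.
  by move=> k; rewrite smu => kl; rewrite nth_mkseq.
have smul : size mu <= size lam by rewrite smu; case: ifP; slia.
have shmu : forall p q, in_shape mu p q = in_shape lam p q && ~~ ((p == h) && (q == i)).
  move=> p q; rewrite /in_shape.
  case: (ltnP 0 p) => pp //=; case: (ltnP 0 q) => qq /=; rewrite ?andbF //.
  case: (leqP p (size mu)) => pm /=.
    rewrite nmu; last slia.
    have -> : p <= size lam by slia.
    rewrite prednK //=.
    case: (eqVneq p h) => [ph|ph] /=; last by rewrite andbT.
    rewrite ph rowh /=.
    case: (eqVneq q i) => [->|qi] /=; first slia.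
    rewrite andbT; slia.
  case: (leqP p (size lam)) => pl //=.
  move: smu; case: ifP => ei smu'; last slia.
  have := i1h ei => hh.
  have -> : p = h by slia.
  rewrite rowh (eqP ei) eqxx /=. slia.
clearbody mu.
have r0 : 0 < r by move: rin => /and4P[].

exists mu; split.
- apply/andP; split.
  + apply/(sortedP 0) => k kl /=.
    have m1 := @part_mono lam k k.+1 hpart (leqnSn k) (ltac:(slia)).
    rewrite !nmu; try slia.
    case: (eqVneq k.+1 h) => [e1|e1]; case: (eqVneq k.+2 h) => [e2|e2]; try slia.
    * have := notabove h.+1 (ltnSn h); rewrite /in_shape /= -e1 /=.
      have -> : k.+2 <= size lam by slia.
      rewrite i1 /= -ltnNge; slia.
    * rewrite -e2 /= in rowh; slia.
  + apply/(all_nthP 0); move=> k kl /=; rewrite nmu //.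
    case: ifP => [/eqP e1|e1].
      move: kl; rewrite smu; case: ifP => [ei|/negbT ei]; slia.
    apply: part_pos => //; slia.
- move=> p q; rewrite shmu => /andP[hl hn]; rewrite /remove_slide.
  case: ifP => [/andP[/eqP qi rp]|_]; last by apply: Tpos.
  subst q; have := hmax _ hl => ph.
  apply: Tpos; apply: colbelow => //; move: hn; rewrite eqxx andbT; slia.
- move=> p q; rewrite shmu negb_and negbK => /orP[nl|/andP[/eqP ph /eqP qi]].
  + rewrite /remove_slide; case: ifP => [/andP[/eqP qi rp]|_]; last by apply: Tzero.
    subst q; apply: Tzero; apply: notabove.
    case: (leqP p h) => ph; last slia.
    by move: nl; rewrite colbelow //; slia.
  + subst; rewrite /remove_slide eqxx rh /=; apply: Tzero; apply: notabove; slia.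
- move=> p q; rewrite !shmu => /andP[l1 n1] /andP[l2 n2]; rewrite /remove_slide.
  case: (eqVneq q.+1 i) => [qi|qi].
    have qq : (q == q.+1) = false by rewrite eqn_leq ltnn andbF.
    rewrite -qi qq /=; case: (leqP r p) => rp /=; last by apply: Trow.
    have l2' : in_shape lam p i by rewrite -qi.
    have ph := hmax _ l2'.
    move: n2; rewrite qi eqxx andbT => n2.
    have c3 : in_shape lam p.+1 q.+1 by rewrite qi; apply: colbelow; slia.
    have := Tcol p q.+1 l2 c3.
    have := Trow p q l1 l2; rewrite -qi; slia.
  rewrite /=.
  case: (eqVneq q i) => [qe|qe] /=; last by apply: Trow.
  subst q; case: (leqP r p) => rp /=; last by apply: Trow.
  have ph := hmax _ l1.
  move: n1; rewrite eqxx andbT => n1.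
  have := rmax p.+1 (ltac:(slia)) (colbelow p.+1 (ltac:(slia)) (ltac:(slia))).
  rewrite /lt_above /= negb_or => /andP[_]; slia.
- move=> p q; rewrite !shmu => /andP[l1 n1] /andP[l2 n2]; rewrite /remove_slide.
  case: (eqVneq q i) => [qi|qi] /=; last by apply: Tcol.
  subst q; have ph := hmax _ l2.
  move: n2; rewrite eqxx andbT => n2.
  have c2 := colbelow p.+2 (ltac:(slia)) (ltac:(slia)).
  have t1 := Tcol _ _ l2 c2.
  case: (leqP r p) => rp.
    have -> : r <= p.+1 by slia.
    by [].
  case: (eqVneq r p.+1) => [e|e].
    rewrite e leqnn /=; have := Tcol _ _ l1 l2; slia.
  have -> : r <= p.+1 = false by slia.
  by apply: Tcol.
Qed.
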